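(* Let $\epsilon<2$ be a constant. For any instance oracle $f$ with $\max\{|f(G,v)|: G \text{ an } n\text{-node graph}, v\in G\}=o(n\log n)$ and any deterministic exploration algorithm $A$, there exist a constant $c>0$ and infinitely many $n$ such that for each of them some $n$-node graph $G$ and starting node $v$ force the agent executing $A$ with input $f(G,v)$ from $v$ to make at least $c n^{\epsilon}$ edge traversals before completing exploration; i.e., exploration takes time $\Omega(n^\epsilon)$ on some $n$-node graph, for arbitrarily large $n$.
   Context: Model: a graph is a simple connected undirected graph with $n$ nodes. Nodes are unlabeled; at each node of degree $d$ the incident edges carry distinct port numbers $0,\dots,d-1$, arbitrarily assigned. A mobile agent starts at some node. At each step, located at a node $u$ whose degree it knows, it chooses a port at $u$ and traverses the corresponding edge to a neighbor $w$; upon arrival it learns the port number of this edge at $w$ and the degree of $w$. The agent must visit all nodes and stop; the time of exploration is the number of edge traversals. A deterministic exploration algorithm receives as input a binary string (advice); its size is its length. An instance oracle is a function assigning a binary string $f(G,v)$ to each pair $(G,v)$ where $G$ is a port-numbered graph and $v$ is the starting node of the agent. Logarithms are to base 2. *)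

(* Defs.v *)
From Stdlib Require Export Reals List Arith.
Export ListNotations.
Open Scope R_scope.

Definition log2 (x : R) : R := ln x / ln 2.

(* Nodes are 0 .. pn-1.  [deg u] is the degree of u;
   for a port p < deg u, [nbr u p] is the neighbour reached through port p
   and [rport u p] is the port number of that edge at the neighbour.
   Values outside the domain are irrelevant junk. *)
Record pgraph := PGraph {
  pn : nat;
  deg : nat -> nat;
  nbr : nat -> nat -> nat;
  rport : nat -> nat -> nat
}.

Inductive reach (G : pgraph) : nat -> nat -> Prop :=
| reach_refl u : reach G u u
| reach_step u p w : (p < deg G u)%nat -> reach G (nbr G u p) w -> reach G u w.

Definition pg_ok (G : pgraph) : Prop :=
  (1 <= pn G)%nat /\
  (forall u p, (u < pn G)%nat -> (p < deg G u)%nat ->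
     (nbr G u p < pn G)%nat /\
     (rport G u p < deg G (nbr G u p))%nat /\
     nbr G (nbr G u p) (rport G u p) = u /\
     rport G (nbr G u p) (rport G u p) = p /\
     nbr G u p <> u) /\
  (forall u p q, (u < pn G)%nat -> (p < deg G u)%nat -> (q < deg G u)%nat ->
     p <> q -> nbr G u p <> nbr G u q) /\
  (forall u w, (u < pn G)%nat -> (w < pn G)%nat -> reach G u w).

(* A deterministic exploration algorithm: given the advice, the degree of the
   starting node and the history of observations
   (port taken, port of entry at the new node, degree of the new node),
   it outputs [None] (stop) or [Some p] (traverse port p). *)
Definition algo := list bool -> nat -> list (nat * nat * nat) -> option nat.

Definition oracle := pgraph -> nat -> list bool.

(* State after k steps: (current node, history, visited nodes), or None if
   the agent stopped earlier or chose an invalid port. *)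
Fixpoint run (G : pgraph) (A : algo) (adv : list bool) (v : nat) (k : nat)
  : option (nat * list (nat * nat * nat) * list nat) :=
  match k with
  | O => Some (v, [], [v])
  | S k' =>
    match run G A adv v k' with
    | Some (u, h, vis) =>
      match A adv (deg G v) h with
      | Some p =>
        if Nat.ltb p (deg G u) then
          let w := nbr G u p in
          Some (w, h ++ [(p, rport G u p, deg G w)], w :: vis)
        else None
      | None => None
      end
    | None => None
    end
  end.

Definition completes_at (G : pgraph) (A : algo) (adv : list bool) (v k : nat) : Prop :=
  exists u h vis,
    run G A adv v k = Some (u, h, vis) /\
    A adv (deg G v) h = None /\
    (forall x, (x < pn G)%nat -> In x vis).

(* Main.v *)
Require Import Defs.
From Stdlib Require Import Reals.
From Stdlib Require Import Lia Lra Classical.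
From mathcomp Require all_boot zify.
Module Cnt.
Import all_boot zify.
Local Open Scope nat_scope.
Set Implicit Arguments. Unset Strict Implicit.

Lemma exp_mono a b e : a <= b -> a ^ e <= b ^ e.
Proof. move=> H; elim: e => [|e IH]; first by []. by rewrite !expnS leq_mul. Qed.

Lemma ffact_le_exp n k : n ^_ k <= n ^ k.
Proof.
elim: k n => [|k IH] n; first by rewrite ffactn0 expn0.
rewrite ffactnS expnS leq_mul //.
apply: leq_trans (IH _) _. by apply: exp_mono; rewrite leq_pred.
Qed.

Lemma bernoulli a k : a ^ k.+1 + k.+1 * a ^ k <= (a.+1) ^ k.+1.
Proof.
elim: k => [|k IH]; first by rewrite !expn1 expn0; lia.
rewrite (expnS a.+1) -[X in _ <= X]/(a.+1 * (a.+1)^k.+1).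
have H : a.+1 * (a ^ k.+1 + k.+1 * a ^ k) <= a.+1 * (a.+1) ^ k.+1 by rewrite leq_mul2l IH orbT.
apply: leq_trans H. rewrite !expnS. nia.
Qed.

Definition Sm (T m : nat) := #|[set B : {set 'I_T} | #|B| <= m]|.

Lemma Sm_rec T m : Sm T m.+1 = Sm T m + 'C(T, m.+1).
Proof.
have -> : 'C(T, m.+1) = #|[set B : {set 'I_T} | #|B| == m.+1]| by rewrite card_draws card_ord.
rewrite /Sm.
have -> : [set B : {set 'I_T} | #|B| <= m.+1] = [set B : {set 'I_T} | #|B| <= m] :|: [set B : {set 'I_T} | #|B| == m.+1].
  by apply/setP => B; rewrite !inE leq_eqVlt ltnS orbC.
rewrite cardsU.
have -> : [set B : {set 'I_T} | #|B| <= m] :&: [set B : {set 'I_T} | #|B| == m.+1] = set0.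
  apply/setP => B; rewrite !inE. case: (#|B| =P m.+1) => [->|]; first by rewrite ltnn.
  by rewrite andbF.
by rewrite cards0 subn0.
Qed.

Lemma Sm_bound T m : Sm T m * m`! <= (T + m) ^ m.
Proof.
elim: m => [|m IH].
  rewrite /Sm fact0 expn0 muln1.
  have -> : [set B : {set 'I_T} | #|B| <= 0] = [set set0].
    apply/setP => B; rewrite !inE leqn0 cards_eq0. by [].
  by rewrite cards1.
rewrite Sm_rec factS mulnDl.
have H1 : 'C(T, m.+1) * (m.+1 * m`!) <= T ^ m.+1.
  by rewrite -factS bin_ffact ffact_le_exp.
have H2 : Sm T m * (m.+1 * m`!) <= m.+1 * (T + m) ^ m.
  by rewrite mulnCA leq_mul2l IH orbT.
have H3 := bernoulli (T + m) m.
have H4 : T ^ m.+1 <= (T + m) ^ m.+1 by apply: exp_mono; rewrite leq_addr.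
rewrite addnS. lia.
Qed.

Fixpoint cnt (f : nat -> bool) (T : nat) : nat :=
  match T with 0 => 0 | S T' => cnt f T' + (if f T' then 1 else 0) end.

Lemma card_E (E : nat -> bool) T : #|[set t : 'I_T | E t]| = cnt E T.
Proof.
rewrite -sum1dep_card big_mkcond /=.
elim: T => [|T IH]; first by rewrite big_ord0.
rewrite big_ord_recr /= IH. by case: (E T).
Qed.

Definition advcode L (l : seq bool) : 'I_L.+1 * {ffun 'I_L -> bool} :=
  (inord (size l), [ffun i : 'I_L => nth false l i]).

Lemma advcode_inj L l l' : size l <= L -> size l' <= L -> advcode L l = advcode L l' -> l = l'.
Proof.
move=> Hl Hl' [] Hs Ht.
have Hs' : size l = size l'.
  by have := congr1 val Hs; rewrite /= !inordK.
apply: (eq_from_nth (x0 := false) Hs') => i Hi.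
have Hi' : i < L by apply: leq_trans Hl.
have := congr1 (fun f : {ffun 'I_L -> bool} => f (Ordinal Hi')) Ht.
by rewrite !ffunE.
Qed.

Lemma pigeon (M R L T m : nat) (Q : (nat -> nat) -> Prop)
  (adv : (nat -> nat) -> list bool) (E : (nat -> nat) -> nat -> bool) :
  (forall s, Q s -> size (adv s) <= L /\ cnt (E s) T <= m) ->
  (forall s s', Q s -> Q s' -> adv s = adv s' ->
     (forall t, t < T -> E s t = E s' t) -> forall i, i < M -> s i = s' i) ->
  (L.+1) * 2 ^ L * (T + m) ^ m < R ^ M * m`! ->
  ~ (forall s, (forall i, i < M -> s i < R) -> Q s).
Proof.
move=> Hc Hinj Hnum Hall.
pose toN (f : {ffun 'I_M -> 'I_R}) : nat -> nat :=
  fun i => odflt 0 (omap (fun j : 'I_M => nat_of_ord (f j)) (insub i)).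
have toNE f (j : 'I_M) : toN f j = f j.
  by rewrite /toN valK.
have HQ f : Q (toN f).
  apply: Hall => i Hi. by rewrite -[i]/(nat_of_ord (Ordinal Hi)) toNE.
pose phi (f : {ffun 'I_M -> 'I_R}) := (advcode L (adv (toN f)), [set t : 'I_T | E (toN f) t]).
have phi_inj : injective phi.
  move=> f f' Hphi.
  have Ha : advcode L (adv (toN f)) = advcode L (adv (toN f')) := congr1 fst Hphi.
  have He := congr1 snd Hphi; simpl in He.
  have [Hl _] := Hc _ (HQ f). have [Hl' _] := Hc _ (HQ f').
  have Ha' := advcode_inj Hl Hl' Ha.
  have HE : forall t, t < T -> E (toN f) t = E (toN f') t.
    move=> t Ht. have := congr1 (fun S : {set 'I_T} => (Ordinal Ht) \in S) He. by rewrite !inE.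
  apply/ffunP => j. apply: val_inj.
  have := Hinj _ _ (HQ f) (HQ f') Ha' HE j (ltn_ord j). by rewrite !toNE.
have H1 : R ^ M <= (L.+1 * 2 ^ L) * Sm T m.
  rewrite -[R in R ^ _]card_ord -[M in _ ^ M]card_ord -card_ffun.
  have -> : #|{ffun 'I_M -> 'I_R}| = #|phi @: [set: {ffun 'I_M -> 'I_R}]|.
    by rewrite card_imset // cardsT.
  have -> : L.+1 * 2 ^ L = #|{: 'I_L.+1 * {ffun 'I_L -> bool}}|.
    by rewrite card_prod card_ord card_ffun card_bool card_ord.
  rewrite /Sm -cardsT -cardsX.
  apply: subset_leq_card. apply/subsetP => c /imsetP [f _ ->].
  rewrite !inE /= card_E. by have [_ ->] := Hc _ (HQ f).
have H2 := Sm_bound T m.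
have H3 : R ^ M * m`! <= L.+1 * 2 ^ L * (T + m) ^ m.
  apply: leq_trans (leq_mul H1 (leqnn _)) _. rewrite -mulnA leq_mul2l H2 orbT //.
by move: (leq_trans Hnum H3); rewrite ltnn.
Qed.

Lemma expE x y : expn x y = Nat.pow x y.
Proof. by elim: y => //= y IH; rewrite expnS IH. Qed.
Lemma factE' x : factorial x = Factorial.fact x.
Proof. by elim: x => //= y IH; rewrite factS IH. Qed.

Lemma pigeonS (M R L T m : nat) (Q : (nat -> nat) -> Prop)
  (adv : (nat -> nat) -> list bool) (E : (nat -> nat) -> nat -> bool) :
  (forall s, Q s -> Nat.le (length (adv s)) L /\ Nat.le (cnt (E s) T) m) ->
  (forall s s', Q s -> Q s' -> adv s = adv s' ->
     (forall t, Nat.lt t T -> E s t = E s' t) -> forall i, Nat.lt i M -> s i = s' i) ->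
  Nat.lt (Nat.mul (Nat.mul (S L) (Nat.pow 2 L)) (Nat.pow (Nat.add T m) m))
         (Nat.mul (Nat.pow R M) (Factorial.fact m)) ->
  ~ (forall s, (forall i, Nat.lt i M -> Nat.lt (s i) R) -> Q s).
Proof.
move=> H1 H2 H3 H4.
apply: (@pigeon M R L T m Q adv E).
- move=> s /H1 [/leP a /leP b]. by rewrite a b.
- move=> s s' q q' e He i /ltP Hi. apply: (H2 s s' q q' e) => // t Ht. apply: He. by apply/ltP.
- apply/ltP. by rewrite !expE factE'.
- move=> s Hs. apply: H4 => i Hi. apply/ltP. apply: Hs. by apply/ltP.
Qed.
End Cnt.

Open Scope nat_scope.
Open Scope bool_scope.

Section Gr.
End Gr.

Definition gdeg (m u : nat) : nat := if Nat.ltb u (2*m) then m else 1.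

Definition gnbr (m : nat) (g : nat -> nat) (u p : nat) : nat :=
  if Nat.ltb u m then (if Nat.eqb p (g u) then (2*m + u)%nat else (m + p)%nat)
  else if Nat.ltb u (2*m) then (if Nat.eqb (g p) (u - m) then (3*m + p)%nat else p)
  else if Nat.ltb u (3*m) then (u - 2*m)%nat
  else (m + g (u - 3*m))%nat.

Definition grport (m : nat) (g : nat -> nat) (u p : nat) : nat :=
  if Nat.ltb u m then (if Nat.eqb p (g u) then 0%nat else u)
  else if Nat.ltb u (2*m) then (if Nat.eqb (g p) (u - m) then 0%nat else (u - m)%nat)
  else if Nat.ltb u (3*m) then g (u - 2*m)
  else (u - 3*m)%nat.

Definition GG (m : nat) (g : nat -> nat) : pgraph :=
  PGraph (4*m) (gdeg m) (gnbr m g) (grport m g).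

Definition gvalid (m : nat) (g : nat -> nat) : Prop :=
  (3 <= m)%nat /\ g 0%nat = 1%nat /\ g 1%nat = 2%nat /\
  (forall i, (i < m)%nat -> (1 <= g i)%nat /\ (g i < m)%nat).

Lemma addsubK (a b : nat) : (a + b - a = b)%nat. Proof. lia. Qed.

Ltac dsp := repeat match goal with
  | |- context [Nat.ltb ?a ?b] => destruct (Nat.ltb_spec a b)
  | |- context [Nat.eqb ?a ?b] => destruct (Nat.eqb_spec a b)
  | |- context [Nat.leb ?a ?b] => destruct (Nat.leb_spec a b)
  | H : context [Nat.leb ?a ?b] |- _ => destruct (Nat.leb_spec a b)
  | H : context [Nat.ltb ?a ?b] |- _ => destruct (Nat.ltb_spec a b)
  | H : context [Nat.eqb ?a ?b] |- _ => destruct (Nat.eqb_spec a b)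
  end.

Lemma reach_trans G u v w : reach G u v -> reach G v w -> reach G u w.
Proof. induction 1; intros; auto. eapply reach_step; eauto. Qed.

Lemma reach1 G u p w : (p < deg G u)%nat -> nbr G u p = w -> reach G u w.
Proof. intros. eapply reach_step; eauto. subst; constructor. Qed.

Lemma GG_ok m g : gvalid m g -> pg_ok (GG m g).
Proof.
intros (Hm & Hg0 & Hg1 & Hg).
assert (Hgm : forall i, (i < m)%nat -> g i <> (i - i + 0)%nat -> True) by auto.
split; [simpl; lia|]. split; [|split].
- intros u p Hu Hp. simpl in *. unfold gdeg, gnbr, grport in *.
  destruct (Nat.ltb_spec u m).
  + destruct (Hg u) as [Ha Hb]; auto.
    destruct (Nat.eqb_spec p (g u)).
    * rewrite !addsubK. dsp; try lia; try (match goal with |- ?G => idtac "LEFT" G end).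
    * rewrite !addsubK. dsp; try lia; try (match goal with |- ?G => idtac "LEFT" G end).
  + destruct (Nat.ltb_spec u (2*m)).
    * destruct (Hg p) as [Ha Hb]; [lia|].
      destruct (Nat.eqb_spec (g p) (u - m)).
      -- rewrite !addsubK. dsp; try lia; try (match goal with |- ?G => idtac "LEFT" G end).
      -- dsp; try lia; try (match goal with |- ?G => idtac "LEFT" G end).
    * destruct (Nat.ltb_spec u (3*m)).
      -- destruct (Hg (u - 2*m)%nat) as [Ha Hb]; [lia|]. dsp; try lia; try (match goal with |- ?G => idtac "LEFT" G end).
      -- destruct (Hg (u - 3*m)%nat) as [Ha Hb]; [lia|]. rewrite !addsubK. dsp; try lia; try (match goal with |- ?G => idtac "LEFT" G end).
- intros u p q Hu Hp Hq Hpq. simpl in *. unfold gdeg, gnbr in *. dsp; lia.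
- assert (E1 : forall i, i < m -> reach (GG m g) i m).
  { intros i Hi. destruct (Hg i Hi). apply (reach1 _ _ 0); cbn [deg nbr GG]; unfold gdeg, gnbr; dsp; lia. }
  assert (E2 : forall i, i < m -> reach (GG m g) m i).
  { intros i Hi. destruct (Hg i Hi). apply (reach1 _ _ i); cbn [deg nbr GG]; unfold gdeg, gnbr; dsp; lia. }
  assert (E3 : forall j, j < m -> reach (GG m g) (m + j) m).
  { intros j Hj. destruct (Nat.eq_dec j 0) as [->|]. rewrite Nat.add_0_r; constructor.
    destruct (Nat.eq_dec j 1) as [->|].
    - eapply reach_trans; [|apply (E1 1); lia]. apply (reach1 _ _ 1); cbn [deg nbr GG]; unfold gdeg, gnbr; dsp; lia.
    - eapply reach_trans; [|apply (E1 0); lia]. apply (reach1 _ _ 0); cbn [deg nbr GG]; unfold gdeg, gnbr; dsp; lia. }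
  assert (E4 : forall j, j < m -> reach (GG m g) m (m + j)).
  { intros j Hj. destruct (Nat.eq_dec j 1) as [->|].
    - eapply reach_trans; [apply (E2 1); lia|]. apply (reach1 _ _ 1); cbn [deg nbr GG]; unfold gdeg, gnbr; dsp; lia.
    - eapply reach_trans; [apply (E2 0); lia|]. apply (reach1 _ _ j); cbn [deg nbr GG]; unfold gdeg, gnbr; dsp; lia. }
  assert (E5 : forall u, u < 4 * m -> reach (GG m g) u m /\ reach (GG m g) m u).
  { intros u Hu.
    destruct (Nat.ltb_spec u m). { split; [apply E1 | apply E2]; lia. }
    destruct (Nat.ltb_spec u (2*m)).
    { replace u with (m + (u - m)) by lia. split; [apply E3 | apply E4]; lia. }
    destruct (Nat.ltb_spec u (3*m)).
    { destruct (Hg (u - 2*m)) as [Ha Hb]; [lia|]. split.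
      - eapply reach_trans; [|apply (E1 (u - 2*m)); lia]. apply (reach1 _ _ 0); cbn [deg nbr GG]; unfold gdeg, gnbr; dsp; lia.
      - eapply reach_trans; [apply (E2 (u - 2*m)); lia|]. apply (reach1 _ _ (g (u - 2*m))); cbn [deg nbr GG]; unfold gdeg, gnbr; dsp; lia. }
    { destruct (Hg (u - 3*m)) as [Ha Hb]; [lia|]. split.
      - eapply reach_trans; [|apply (E3 (g (u - 3*m))); lia]. apply (reach1 _ _ 0); cbn [deg nbr GG]; unfold gdeg, gnbr; dsp; lia.
      - eapply reach_trans; [apply (E4 (g (u - 3*m))); lia|]. apply (reach1 _ _ (u - 3*m)); cbn [deg nbr GG]; unfold gdeg, gnbr; dsp; lia. } }
  intros u w Hu Hw. simpl in Hu, Hw. destruct (E5 u Hu). destruct (E5 w Hw). eapply reach_trans; eauto.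
Qed.

Lemma run_cur G A a v t u h vis : run G A a v t = Some (u, h, vis) -> In u vis.
Proof.
destruct t; simpl.
- intros H; inversion H; simpl; auto.
- destruct (run G A a v t) as [[[u0 h0] vis0]|]; try discriminate.
  destruct (A a (deg G v) h0) as [p|]; try discriminate.
  destruct (Nat.ltb p (deg G u0)); try discriminate.
  intros H; inversion H; simpl; auto.
Qed.

Lemma run_valid G A a v t u h vis : pg_ok G -> (v < pn G) -> run G A a v t = Some (u, h, vis) -> u < pn G.
Proof.
intros Hok Hv. revert u h vis. induction t; simpl; intros u h vis.
- intros H; inversion H; subst; auto.
- destruct (run G A a v t) as [[[u0 h0] vis0]|] eqn:E; try discriminate.
  destruct (A a (deg G v) h0) as [p|]; try discriminate.
  destruct (Nat.ltb_spec p (deg G u0)); try discriminate.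
  intros Heq; inversion Heq; subst. destruct Hok as (_ & Hok & _).
  apply Hok; eauto.
Qed.

Notation cnt := Cnt.cnt.

Lemma cnt_le f T : cnt f T <= T.
Proof. induction T; simpl; [lia|]. destruct (f T); lia. Qed.

Lemma cnt_mono f f' T : (forall i, f i = true -> f' i = true) -> cnt f T <= cnt f' T.
Proof.
intros H. induction T; simpl; [lia|].
destruct (f T) eqn:E; [rewrite (H T E)|destruct (f' T)]; lia.
Qed.

Lemma cnt_incr f f' T i0 : (forall i, f i = true -> f' i = true) -> i0 < T ->
  f i0 = false -> f' i0 = true -> cnt f T + 1 <= cnt f' T.
Proof.
intros H Hi H0 H1. induction T; [lia|]. simpl.
destruct (Nat.eq_dec i0 T) as [->|Hne].
- rewrite H0, H1. pose proof (cnt_mono f f' T H). lia.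
- assert (cnt f T + 1 <= cnt f' T) by (apply IHT; lia).
  destruct (f T) eqn:E; [rewrite (H T E)|destruct (f' T)]; lia.
Qed.

Section Sim.
Variable m : nat.

Definition isleaf (w : nat) : bool := Nat.leb (2*m) w && Nat.ltb w (4*m).
Definition idx (w : nat) : nat := if Nat.ltb w (3*m) then w - 2*m else w - 3*m.
Definition known (vis : list nat) (i : nat) : bool :=
  existsb (fun x => isleaf x && Nat.eqb (idx x) i) vis.

Lemma known_In x vis : In x vis -> isleaf x = true -> known vis (idx x) = true.
Proof.
intros Hin Hl. unfold known. apply existsb_exists. exists x. split; auto.
rewrite Hl, Nat.eqb_refl. auto.
Qed.

Lemma known_cons w vis i : known (w :: vis) i = (isleaf w && Nat.eqb (idx w) i) || known vis i.
Proof. reflexivity. Qed.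

Definition disc (G : pgraph) (A : algo) (a : list bool) (t : nat) : bool :=
  match run G A a 0 t with
  | Some (_, _, vis) =>
    match run G A a 0 (S t) with
    | Some (w, _, _) => isleaf w && negb (known vis (idx w))
    | None => false
    end
  | None => false
  end.

Lemma step_agree g g' vis u p :
  gvalid m g -> gvalid m g' ->
  u < 4 * m -> In u vis -> p < gdeg m u ->
  (forall i, i < m -> known vis i = true -> g i = g' i) ->
  (isleaf (gnbr m g u p) && negb (known vis (idx (gnbr m g u p))) =
   isleaf (gnbr m g' u p) && negb (known vis (idx (gnbr m g' u p)))) ->
  gnbr m g u p = gnbr m g' u p /\ grport m g u p = grport m g' u p /\
  (isleaf (gnbr m g u p) = true -> idx (gnbr m g u p) < m /\ g (idx (gnbr m g u p)) = g' (idx (gnbr m g u p))).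
Proof.
intros (Hm & _ & _ & Hg) (_ & _ & _ & Hg') Hu Hin Hp Hinv HD.
unfold gdeg in Hp. unfold gnbr, grport in *.
destruct (Nat.ltb_spec u m).
- rewrite (proj2 (Nat.ltb_lt u (2*m))) in Hp by lia.
  destruct (Hg u) as [Ha Hb]; auto. destruct (Hg' u) as [Ha' Hb']; auto.
  destruct (known vis u) eqn:Ku.
  + rewrite (Hinv u) by auto. split; [reflexivity|split;[reflexivity|]].
    intros Hl. unfold isleaf, idx in *. dsp; try lia; try discriminate;
    rewrite ?addsubK; auto.
  + destruct (Nat.eqb_spec p (g u)); destruct (Nat.eqb_spec p (g' u)); subst;
    unfold isleaf, idx in *; dsp; simpl in *; try lia; rewrite ?addsubK in *;
    rewrite ?Ku in HD; simpl in HD; try discriminate; try congruence;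
    intuition (try lia; try congruence).
- destruct (Nat.ltb_spec u (2*m)).
  + destruct (Hg p) as [Ha Hb]; [lia|]. destruct (Hg' p) as [Ha' Hb']; [lia|].
    destruct (known vis p) eqn:Kp.
    * rewrite (Hinv p) by (auto; lia). split; [reflexivity|split;[reflexivity|]].
      intros Hl. unfold isleaf, idx in *. dsp; try lia; try discriminate;
      rewrite ?addsubK; auto.
    * destruct (Nat.eqb_spec (g p) (u - m)); destruct (Nat.eqb_spec (g' p) (u - m));
      unfold isleaf, idx in *; dsp; simpl in *; try lia; rewrite ?addsubK in *;
      rewrite ?Kp in HD; simpl in HD; try discriminate; try congruence;
      intuition (try lia; try congruence).
  + assert (Hl : isleaf u = true) by (unfold isleaf; dsp; auto; lia).
    pose proof (known_In u vis Hin Hl) as HK.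
    unfold idx in HK. destruct (Nat.ltb_spec u (3*m)).
    * rewrite (Hinv (u - 2*m)) by (auto; lia). split; [reflexivity|split;[reflexivity|]].
      intros Hl'. unfold isleaf in Hl'. dsp; try lia; discriminate.
    * rewrite (Hinv (u - 3*m)) by (auto; lia). split; [reflexivity|split;[reflexivity|]].
      intros Hl'. destruct (Hg' (u - 3*m)); [lia|]. unfold isleaf in Hl'. dsp; try lia; discriminate.
Qed.

Lemma disc_eq G A a t u h vis p :
  run G A a 0 t = Some (u, h, vis) -> A a (deg G 0) h = Some p -> p < deg G u ->
  disc G A a t = isleaf (nbr G u p) && negb (known vis (idx (nbr G u p))).
Proof.
intros H1 H2 H3. unfold disc. simpl. rewrite H1, H2.
rewrite (proj2 (Nat.ltb_lt _ _) H3). reflexivity.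
Qed.

Lemma sim g g' A a T : gvalid m g -> gvalid m g' ->
  (forall t, t < T -> disc (GG m g) A a t = disc (GG m g') A a t) ->
  forall t, t <= T -> run (GG m g) A a 0 t = run (GG m g') A a 0 t /\
     (forall u h vis, run (GG m g) A a 0 t = Some (u,h,vis) ->
        forall i, i < m -> known vis i = true -> g i = g' i).
Proof.
intros Hv Hv' HD. induction t as [|t IH]; intros Ht.
- split; [reflexivity|]. intros u h vis H i Hi Hk. simpl in H. inversion H; subst.
  destruct Hv as (Hm & _). unfold known, isleaf in Hk. simpl in Hk. dsp; simpl in Hk; try lia; discriminate.
- destruct IH as [IH1 IH2]; [lia|].
  assert (HDt := HD t ltac:(lia)).
  destruct (run (GG m g) A a 0 t) as [[[u h] vis]|] eqn:Er.
  + assert (Hu : u < 4 * m).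
    { apply (run_valid (GG m g) A a 0 t u h vis); auto. apply GG_ok; auto.
      simpl. destruct Hv as (Hm & _); lia. }
    assert (Hin : In u vis) by (eapply run_cur; eauto).
    symmetry in IH1.
    destruct (A a (deg (GG m g) 0) h) as [p|] eqn:EA.
    * destruct (Nat.ltb_spec p (gdeg m u)) as [Hp|Hp].
      -- assert (E1 := disc_eq _ _ _ _ _ _ _ _ Er EA Hp).
         assert (EA' : A a (deg (GG m g') 0) h = Some p) by exact EA.
         assert (E2 := disc_eq _ _ _ _ _ _ _ _ IH1 EA' Hp).
         simpl in E1, E2. rewrite E1, E2 in HDt.
         destruct (step_agree g g' vis u p Hv Hv' Hu Hin Hp (IH2 _ _ _ eq_refl) HDt) as (Q1 & Q2 & Q3).
         simpl. rewrite Er, IH1. simpl in EA. rewrite EA.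
         destruct (Nat.ltb_spec p (gdeg m u)); [|lia].
         rewrite Q1, Q2. split; [reflexivity|].
         intros u' h' vis' Heq i Hi Hk. inversion Heq; subst.
         rewrite known_cons in Hk. apply Bool.orb_true_iff in Hk. destruct Hk as [Hk|Hk].
         ++ apply Bool.andb_true_iff in Hk. destruct Hk as [Hk1 Hk2]. apply Nat.eqb_eq in Hk2.
            rewrite <- Q1 in Hk1, Hk2. subst i. apply Q3; auto.
         ++ apply (IH2 u h vis eq_refl); auto.
      -- simpl. rewrite Er, IH1. simpl in EA. rewrite EA.
         destruct (Nat.ltb_spec p (gdeg m u)); [lia|]. split; [reflexivity|]. intros; discriminate.
    * simpl. rewrite Er, IH1. simpl in EA. rewrite EA. split; [reflexivity|]. intros; discriminate.
  + simpl. rewrite Er, <- IH1. split; [reflexivity|]. intros; discriminate.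
Qed.

Lemma disc_none G A a t : run G A a 0 (S t) = None -> disc G A a t = false.
Proof.
intros H. unfold disc. destruct (run G A a 0 t) as [[[u h] vis]|]; [|reflexivity].
rewrite H. reflexivity.
Qed.

Lemma disc_count g A a : gvalid m g -> forall t,
  cnt (disc (GG m g) A a) t <=
  match run (GG m g) A a 0 t with Some (_, _, vis) => cnt (known vis) m | None => m end.
Proof.
intros Hv t. induction t as [|t IH]; [simpl; lia|].
simpl cnt. destruct (run (GG m g) A a 0 t) as [[[u h] vis]|] eqn:Er.
- destruct (A a (deg (GG m g) 0) h) as [p|] eqn:EA.
  + destruct (Nat.ltb_spec p (deg (GG m g) u)) as [Hp|Hp].
    * rewrite (disc_eq _ _ _ _ _ _ _ _ Er EA Hp).
      replace (run (GG m g) A a 0 (S t)) with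
        (Some (nbr (GG m g) u p, h ++ [(p, rport (GG m g) u p, deg (GG m g) (nbr (GG m g) u p))],
               nbr (GG m g) u p :: vis)).
      2:{ simpl. rewrite Er. simpl in EA. rewrite EA. simpl in Hp.
          destruct (Nat.ltb_spec p (gdeg m u)); [reflexivity|lia]. }
      set (w := nbr (GG m g) u p).
      assert (Hmono : forall i, known vis i = true -> known (w :: vis) i = true).
      { intros i Hi. rewrite known_cons, Hi. apply Bool.orb_true_r. }
      destruct (isleaf w && negb (known vis (idx w))) eqn:Ed.
      -- apply Bool.andb_true_iff in Ed. destruct Ed as [Ed1 Ed2].
         apply Bool.negb_true_iff in Ed2.
         assert (cnt (known vis) m + 1 <= cnt (known (w :: vis)) m).
         { apply (cnt_incr _ _ _ (idx w)); auto.
           - unfold isleaf, idx in *. dsp; try lia; discriminate.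
           - rewrite known_cons, Ed1, Nat.eqb_refl. reflexivity. }
         lia.
      -- pose proof (cnt_mono _ _ m Hmono). lia.
    * assert (HN : run (GG m g) A a 0 (S t) = None).
      { simpl. rewrite Er. simpl in EA. rewrite EA. simpl in Hp. destruct (Nat.ltb_spec p (gdeg m u)); [lia|reflexivity]. }
      rewrite (disc_none _ _ _ _ HN), HN.
      pose proof (cnt_le (known vis) m). lia.
  + assert (HN : run (GG m g) A a 0 (S t) = None).
    { simpl. rewrite Er. simpl in EA. rewrite EA. reflexivity. }
    rewrite (disc_none _ _ _ _ HN), HN.
    pose proof (cnt_le (known vis) m). lia.
- assert (HN : run (GG m g) A a 0 (S t) = None).
  { simpl. rewrite Er. reflexivity. }
  rewrite (disc_none _ _ _ _ HN), HN.
  lia.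
Qed.

Lemma disc_count' g A a T : gvalid m g -> cnt (disc (GG m g) A a) T <= m.
Proof.
intros Hv. pose proof (disc_count g A a Hv T).
destruct (run (GG m g) A a 0 T) as [[[u h] vis]|]; auto.
pose proof (cnt_le (known vis) m). lia.
Qed.
End Sim.

Open Scope R_scope.
Lemma step3 k : (1 <= k)%nat -> ((k+1)^k <= 3 * k^k)%nat.
Proof.
intros Hk. apply INR_le. rewrite mult_INR, !pow_INR, plus_INR. simpl (INR 1).
assert (Hk' : 0 < INR k) by (apply lt_0_INR; lia).
replace (INR k + 1) with (INR k * (1 + / INR k)) by (field; lra).
rewrite Rpow_mult_distr.
assert (H1 : (1 + / INR k) ^ k <= exp (/ INR k) ^ k).
{ apply pow_incr. split; [|apply exp_ineq1_le]. assert (0 < / INR k) by (apply Rinv_0_lt_compat; lra). lra. }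
assert (H2 : exp (/ INR k) ^ k = exp 1).
{ rewrite <- Rpower_pow by apply exp_pos. unfold Rpower. rewrite ln_exp. f_equal. field. lra. }
assert (H3 := exp_le_3).
assert (H4 : 0 <= INR k ^ k) by (apply pow_le; lra).
replace (INR 3) with 3 by (simpl; lra).
replace (3 * INR k ^ k) with (INR k ^ k * 3) by ring.
apply Rmult_le_compat_l; lra.
Qed.

Lemma mm_fact m : (m ^ m <= 3 ^ m * Factorial.fact m)%nat.
Proof.
induction m; simpl; [lia|].
destruct (Nat.eq_dec m 0) as [->|Hm]; [simpl; lia|].
pose proof (step3 m ltac:(lia)).
replace (S m) with (m + 1)%nat in * by lia.
assert ((m+1) * (m + 1)^m <= (m+1) * (3 * m^m))%nat by (apply Nat.mul_le_mono_l; auto).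
assert ((m+1) * (3 * m ^ m) <= (m+1) * (3 * (3 ^ m * Factorial.fact m)))%nat by (apply Nat.mul_le_mono_l; lia).
nia.
Qed.

Lemma pow2_gt X : (3 <= X)%nat -> (2 * X < 2 ^ X)%nat.
Proof.
intros H. induction X; [lia|]. destruct (Nat.eq_dec X 2) as [->|]; [simpl; lia|].
rewrite Nat.pow_succ_r'. assert (2 * X < 2 ^ X)%nat by (apply IHX; lia). lia.
Qed.

Lemma numeric K r L : (1 <= K)%nat -> (12 <= r)%nat ->
  (4 * K * L <= 2 ^ (r * K) * (r * K + 2))%nat ->
  (S L * 2 ^ L * (2 ^ (2 * (r * K) - r) + 2 ^ (r * K)) ^ (2 ^ (r * K)) * 3 ^ (2 ^ (r * K))
   < (2 ^ (r * K) - 1) ^ (2 ^ (r * K) - 2) * (2 ^ (r * K)) ^ (2 ^ (r * K)))%nat.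
Proof.
intros HK Hr HL.
set (X := (r * K)%nat) in *. set (m := (2 ^ X)%nat) in *.
assert (HX : (12 <= X)%nat) by (unfold X; nia).
assert (HrX : (r <= X)%nat) by (unfold X; nia).
assert (Hm : (2 * X < m)%nat) by (apply pow2_gt; lia).
set (T := (2 ^ (2 * X - r))%nat).
assert (HmT : (m <= T)%nat) by (apply Nat.pow_le_mono_r; lia).
assert (A1 : (S L * 2 ^ L <= 2 ^ (2 * L))%nat).
{ assert (L < 2 ^ L)%nat by (apply Nat.pow_gt_lin_r; lia).
  replace (2 * L)%nat with (L + L)%nat by lia. rewrite Nat.pow_add_r. nia. }
assert (A2 : ((T + m) ^ m <= 2 ^ ((2 * X - r + 1) * m))%nat).
{ rewrite Nat.pow_mul_r. apply Nat.pow_le_mono_l. rewrite Nat.pow_add_r, Nat.pow_1_r. fold T. lia. }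
assert (A3 : (3 ^ m <= 2 ^ (2 * m))%nat).
{ rewrite Nat.pow_mul_r. apply Nat.pow_le_mono_l. simpl. lia. }
assert (A4 : (2 ^ (X - 1) <= m - 1)%nat).
{ unfold m. replace X with (S (X - 1)) at 2 by lia. rewrite Nat.pow_succ_r'.
  assert (1 <= 2 ^ (X - 1))%nat by (pose proof (Nat.pow_nonzero 2 (X-1) ltac:(lia)); lia).
  lia. }
assert (A5 : (2 ^ ((X - 1) * (m - 2)) <= (m - 1) ^ (m - 2))%nat).
{ rewrite Nat.pow_mul_r. apply Nat.pow_le_mono_l. auto. }
assert (A6 : (m ^ m = 2 ^ (X * m))%nat) by (unfold m; rewrite Nat.pow_mul_r; reflexivity).
assert (E : (2 * L + (2 * X - r + 1) * m + 2 * m < (X - 1) * (m - 2) + X * m)%nat).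
{ assert (2 * K * (2 * L) <= m * (r * K) + 2 * m)%nat by (unfold X in HL; nia).
  unfold X in *. nia. }
assert (B : (2 ^ (2 * L + (2 * X - r + 1) * m + 2 * m) < 2 ^ ((X - 1) * (m - 2) + X * m))%nat)
  by (apply Nat.pow_lt_mono_r; lia).
rewrite !Nat.pow_add_r in B. rewrite A6.
apply Nat.le_lt_trans with (2 ^ (2 * L) * 2 ^ ((2 * X - r + 1) * m) * 2 ^ (2 * m))%nat.
{ apply Nat.mul_le_mono; [apply Nat.mul_le_mono|]; auto. }
apply Nat.lt_le_trans with (1 := B). apply Nat.mul_le_mono_r. auto.
Qed.

Open Scope nat_scope.

Lemma inj_core m g g' A a T k : gvalid m g -> gvalid m g' ->
  (forall t, t < T -> disc m (GG m g) A a t = disc m (GG m g') A a t) ->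
  k < T -> completes_at (GG m g) A a 0 k -> forall i, i < m -> g i = g' i.
Proof.
intros Hv Hv' HD Hk (u & h & vis & Hr & _ & Hall) i Hi.
destruct (sim m g g' A a T Hv Hv' HD k ltac:(lia)) as [_ Hinv].
apply (Hinv u h vis Hr i Hi).
assert (Hin : In (2*m + i) vis) by (apply Hall; simpl; lia).
assert (Hl : isleaf m (2*m+i) = true) by (unfold isleaf; dsp; auto; lia).
pose proof (known_In m _ _ Hin Hl) as HK. unfold idx in HK.
destruct (Nat.ltb_spec (2*m+i) (3*m)); [|lia]. rewrite addsubK in HK. exact HK.
Qed.

Definition gof (s : nat -> nat) : nat -> nat :=
  fun i => if Nat.eqb i 0 then 1 else if Nat.eqb i 1 then 2 else S (s (i - 2)).

Lemma gof_valid m s : 3 <= m -> (forall i, i < m - 2 -> s i < m - 1) -> gvalid m (gof s).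
Proof.
intros Hm Hs. unfold gvalid, gof. split; [auto|]. split; [reflexivity|]. split; [reflexivity|].
intros i Hi. dsp; try lia. pose proof (Hs (i - 2) ltac:(lia)). lia.
Qed.

Open Scope R_scope.

Lemma INR_pow2 j : INR (2 ^ j) = Rpower 2 (INR j).
Proof. rewrite pow_INR, Rpower_pow by lra. simpl; try f_equal; try lra. Qed.

Theorem mainTheorem10 :
  forall (eps : R), eps < 2 ->
  forall (f : oracle),
    (* max { |f(G,v)| : G an n-node graph, v in G } = o(n log n) *)
    (forall d : R, 0 < d -> exists N : nat, forall (n : nat) (G : pgraph) (v : nat),
        (N <= n)%nat -> pg_ok G -> pn G = n -> (v < n)%nat ->
        INR (length (f G v)) <= d * INR n * log2 (INR n)) ->
  forall (A : algo),
    exists c : R, 0 < c /\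
    forall N : nat, exists n : nat, (N <= n)%nat /\
      exists (G : pgraph) (v : nat),
        pg_ok G /\ pn G = n /\ (v < n)%nat /\
        forall k : nat, completes_at G A (f G v) v k ->
          c * Rpower (INR n) eps <= INR k.
Proof.
intros eps Heps f Hf A.
destruct (archimed_cor1 (2 - eps) ltac:(lra)) as [K [HK HK0]].
exists (/ 16). split; [lra|].
intros N.
set (q := (16 * K)%nat).
assert (Hq : 0 < INR q) by (apply lt_0_INR; unfold q; lia).
destruct (Hf (/ INR q) ltac:(apply Rinv_0_lt_compat; lra)) as [Nd HNd].
set (r := (12 + N + Nd)%nat).
set (X := (r * K)%nat).
set (m := (2 ^ X)%nat).
set (n := (4 * m)%nat).
set (T := (2 ^ (2 * X - r))%nat).
set (L := (n * (X + 2) / q)%nat).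
assert (HrX : (r <= X)%nat) by (unfold X; nia).
assert (HXm : (X < m)%nat) by (apply Nat.pow_gt_lin_r; lia).
assert (Hm3 : (3 <= m)%nat) by (unfold r in *; lia).
assert (Hn : n = (2 ^ (X + 2))%nat) by (unfold n, m; rewrite Nat.pow_add_r; simpl; lia).
assert (HNn : (N <= n)%nat) by (unfold n, r in *; lia).
assert (HNdn : (Nd <= n)%nat) by (unfold n, r in *; lia).
set (dom := fun s : nat -> nat => forall i, (i < m - 2)%nat -> (s i < m - 1)%nat).
set (Q := fun s : nat -> nat => dom s /\ exists k, (k < T)%nat /\
        completes_at (GG m (gof s)) A (f (GG m (gof s)) 0%nat) 0%nat k).
set (adv := fun s : nat -> nat => f (GG m (gof s)) 0%nat).
set (E := fun s : nat -> nat => disc m (GG m (gof s)) A (adv s)).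
assert (Hlog : log2 (INR n) = INR (X + 2)).
{ rewrite Hn, pow_INR. unfold log2. replace (INR 2) with 2 by (simpl; lra).
  rewrite ln_pow by lra. pose proof ln_lt_2. field. lra. }
assert (Hpig := @Cnt.pigeonS (m - 2)%nat (m - 1)%nat L T m Q adv E).
assert (Hnot : ~ (forall s, (forall i, (i < m - 2)%nat -> (s i < m - 1)%nat) -> Q s)).
{ apply Hpig.
  - intros s [Hd _]. split.
    + assert (Hv := gof_valid m s Hm3 Hd).
      assert (H1 := HNd n (GG m (gof s)) 0%nat HNdn (GG_ok m _ Hv) eq_refl ltac:(lia)).
      rewrite Hlog in H1. fold (adv s) in H1.
      assert (H2 : INR (length (adv s) * q) <= INR (n * (X + 2))).
      { rewrite !mult_INR. apply (Rmult_le_compat_r (INR q)) in H1; [|lra].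
        replace (/ INR q * INR n * INR (X + 2) * INR q) with (INR n * INR (X + 2)) in H1 by (field; lra).
        exact H1. }
      apply INR_le in H2. unfold L. apply Nat.div_le_lower_bound; [unfold q; lia|]. lia.
    + apply disc_count'. apply gof_valid; auto.
  - intros s s' [Hd [k [Hk Hc]]] [Hd' _] Ha HE i Hi.
    assert (Hv := gof_valid m s Hm3 Hd). assert (Hv' := gof_valid m s' Hm3 Hd').
    assert (HD : forall t, (t < T)%nat -> disc m (GG m (gof s)) A (adv s) t = disc m (GG m (gof s')) A (adv s) t).
    { intros t Ht. rewrite Ha at 2. apply HE. auto. }
    assert (Heq := inj_core m (gof s) (gof s') A (adv s) T k Hv Hv' HD Hk Hc (i + 2) ltac:(lia)).
    unfold gof in Heq. destruct (Nat.eqb_spec (i + 2) 0); [lia|]. destruct (Nat.eqb_spec (i+2) 1); [lia|].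
    replace (i + 2 - 2)%nat with i in Heq by lia. congruence.
  - assert (HLq : (q * L <= n * (X + 2))%nat) by (apply Nat.mul_div_le; unfold q; lia).
    assert (H4 : (4 * K * L <= 2 ^ (r * K) * (r * K + 2))%nat) by (unfold q, n, m, X in *; lia).
    assert (H5 := numeric K r L ltac:(lia) ltac:(unfold r; lia) H4).
    fold X in H5. fold m in H5. fold T in H5.
    assert (H6 := mm_fact m).
    assert (H7 : ((m - 1) ^ (m - 2) * m ^ m <= (m - 1) ^ (m - 2) * (3 ^ m * Factorial.fact m))%nat)
      by (apply Nat.mul_le_mono_l; auto).
    assert (H8 : (0 < 3 ^ m)%nat) by (pose proof (Nat.pow_nonzero 3 m); lia).
    nia. }
apply not_all_ex_not in Hnot. destruct Hnot as [s Hs].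
apply imply_to_and in Hs. destruct Hs as [Hd HnQ].
assert (Hv := gof_valid m s Hm3 Hd).
exists n. split; [auto|].
exists (GG m (gof s)), 0%nat. split; [apply GG_ok; auto|]. split; [reflexivity|]. split; [lia|].
intros k Hk.
destruct (Nat.ltb_spec k T) as [HkT|HkT].
{ exfalso. apply HnQ. split; [auto|]. exists k. split; auto. }
apply le_INR in HkT.
assert (HT : Rpower (INR n) eps <= 16 * INR T).
{ rewrite Hn, INR_pow2, Rpower_mult.
  unfold T. rewrite INR_pow2.
  replace 16 with (Rpower 2 (INR 4)) by (rewrite Rpower_pow by lra; simpl; lra).
  rewrite <- Rpower_plus. apply Rle_Rpower; [lra|].
  rewrite minus_INR by lia. rewrite !plus_INR, !mult_INR.
  unfold X. rewrite mult_INR. simpl (INR 2). simpl (INR 4).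
  assert (HK1 : 0 < INR K) by (apply lt_0_INR; lia).
  assert (Hr0 : 0 <= INR r) by apply pos_INR.
  assert (Hy : INR K * / INR K = 1) by (field; lra).
  assert (Hy0 : 0 < / INR K) by (apply Rinv_0_lt_compat; lra).
  assert (He : eps <= 2 - / INR K) by lra.
  assert (H1 : (INR r * INR K + (1 + 1)) * eps <= (INR r * INR K + (1 + 1)) * (2 - / INR K)).
  { apply Rmult_le_compat_l; [nra|lra]. }
  assert (H2 : (INR r * INR K + (1 + 1)) * (2 - / INR K) = 2 * (INR r * INR K) + 4 - INR r * (INR K * / INR K) - 2 * / INR K) by ring.
  rewrite Hy in H2. lra. }
lra.
Qed.
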